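(* Let $G=(V,E)$, $k\ge 3$, the choice strings $c_{i,j}$ ($1\le i<j\le k$), $L=k+1$ and $d=k-2$ be as in the construction described in the context. If $G$ has a clique of size $k$, then there is a string $s$ of length $L$ such that every choice string $c_{i,j}$ has a substring $s_{i,j}$ of length $L$ with $d_H(s,s_{i,j})\le d$.
   Context: Let $G=(V,E)$ be an undirected simple graph with $V=\{v_1,\dots,v_n\}$ and edge set $E=\{e_1,\dots,e_m\}$, and let $k\ge 3$ be an integer; put $N=\binom{k}{2}$. The alphabet consists of pairwise distinct symbols: encoding symbols $\sigma_1,\dots,\sigma_n$, string identification symbols $\varphi_1,\dots,\varphi_N$, and a synchronizing symbol $\#$. Order the pairs $(i,j)$ with $1\le i<j\le k$ lexicographically, $(1,2),(1,3),\dots,(1,k),(2,3),\dots,(k-1,k)$, and let $i'$ denote the position of $(i,j)$ in this order. For an edge $e$ joining $v_r$ and $v_s$ with $r<s$ define $\mathrm{block}(i,j,e)=\varphi_{i'}^{\,i-1}\,\sigma_r\,\varphi_{i'}^{\,j-i-1}\,\sigma_s\,\varphi_{i'}^{\,k-j}\,\#$ (a string of length $k+1$), and the choice string $c_{i,j}=\mathrm{block}(i,j,e_1)\,\varphi_{i'}^{\,k}\,\mathrm{block}(i,j,e_2)\,\varphi_{i'}^{\,k}\cdots\varphi_{i'}^{\,k}\,\mathrm{block}(i,j,e_m)$. Set $L=k+1$ and $d=k-2$. $d_H$ denotes Hamming distance. *)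

(* Defs.v *)
From HB Require Import structures.
From mathcomp Require Import all_boot.
Set Implicit Arguments. Unset Strict Implicit. Unset Printing Implicit Defensive.

(* Alphabet: encoding symbols sigma_r (r a vertex index), string
   identification symbols phi_t (t = 1..N), and the synchronizing symbol #. *)
Inductive Sym := Sigma of nat | Phi of nat | Hash.

Definition Sym_eqb (a b : Sym) : bool :=
  match a, b with
  | Sigma x, Sigma y => x == y
  | Phi x, Phi y => x == y
  | Hash, Hash => true
  | _, _ => false
  end.

Lemma Sym_eqP : Equality.axiom Sym_eqb.
Proof.
case=> [x|x|] [y|y|] /=; try by constructor.
- by apply: (iffP eqP) => [->|[]].
- by apply: (iffP eqP) => [->|[]].
Qed.

HB.instance Definition _ := hasDecEq.Build Sym Sym_eqP.

(* A simple graph on vertices 0..n-1 (v_{r+1} <-> r) given by its list of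
   edges e_1..e_m, each edge {v_r, v_s} stored as the pair (r, s) with r < s. *)
Definition simple_graph (n : nat) (es : seq (nat * nat)) : Prop :=
  uniq es /\ all (fun e => (e.1 < e.2) && (e.2 < n)) es.

Definition adjacent (es : seq (nat * nat)) (u v : nat) : bool :=
  ((u, v) \in es) || ((v, u) \in es).

Definition has_clique (n : nat) (es : seq (nat * nat)) (k : nat) : Prop :=
  exists K : seq nat,
    [/\ uniq K, size K = k, all (fun v => v < n) K &
        {in K &, forall u v, u != v -> adjacent es u v}].

Definition pairs_lex (k : nat) : seq (nat * nat) :=
  [seq ij <- [seq (i, j) | i <- iota 1 k, j <- iota 1 k] | ij.1 < ij.2].

Definition pos (k i j : nat) : nat := (index (i, j) (pairs_lex k)).+1.

Definition block (k i j : nat) (e : nat * nat) : seq Sym :=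
  let p := Phi (pos k i j) in
  nseq (i - 1) p ++ [:: Sigma e.1] ++ nseq (j - i - 1) p ++ [:: Sigma e.2]
    ++ nseq (k - j) p ++ [:: Hash].

Definition choice_string (es : seq (nat * nat)) (k i j : nat) : seq Sym :=
  match es with
  | [::] => [::]
  | e :: es' => block k i j e ++
      flatten [seq nseq k (Phi (pos k i j)) ++ block k i j e' | e' <- es']
  end.

Definition hamming (s t : seq Sym) : nat :=
  count (fun p => p.1 != p.2) (zip s t).

(* Main.v *)
Require Import Defs.
From HB Require Import structures.
From mathcomp Require Import all_boot.
From mathcomp Require Import zify.

Lemma hamming_cat (s1 s2 t1 t2 : seq Sym) : size s1 = size t1 ->
  hamming (s1 ++ s2) (t1 ++ t2) = hamming s1 t1 + hamming s2 t2.
Proof. by move=> h; rewrite /hamming zip_cat // count_cat. Qed.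

Lemma hamming_le (s t : seq Sym) : hamming s t <= size s.
Proof. rewrite /hamming; apply: leq_trans (count_size _ _) _; by rewrite size_zip geq_minl. Qed.

Lemma hamming_cons (x : Sym) s t : hamming (x :: s) (x :: t) = hamming s t.
Proof. by rewrite /hamming /= eqxx. Qed.

Lemma infix_flat (P : seq Sym) (f : nat * nat -> seq Sym) e es :
  e \in es -> infix (f e) (flatten [seq P ++ f x | x <- es]).
Proof.
elim: es => //= x es IH; rewrite in_cons => /orP[/eqP->|/IH h].
  by rewrite -catA; apply: infix_infix.

by apply: (infix_trans h); apply: suffix_infix.
Qed.

Lemma split_nth (T : Type) (x0 : T) (S : seq T) i :
  i < size S -> S = take i S ++ nth x0 S i :: drop i.+1 S.
Proof. by move=> h; rewrite -drop_nth // cat_take_drop. Qed.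

Theorem proposition1 (n : nat) (es : seq (nat * nat)) (k : nat) :
  simple_graph n es -> 3 <= k -> has_clique n es k ->
  exists s : seq Sym, size s = k.+1 /\
    forall i j, 1 <= i -> i < j -> j <= k ->
      exists t : seq Sym, [/\ size t = k.+1, infix t (choice_string es k i j)
                            & hamming s t <= k - 2].
Proof.
move=> [_ Hes] hk [K [uK sK _ adjK]].
set K' := sort leq K.
have sK' : size K' = k by rewrite size_sort.
have srt : sorted ltn K'.
  by rewrite ltn_sorted_uniq_leq sort_uniq uK; apply: sort_sorted; exact: leq_total.
set S := [seq Sigma v | v <- K'].
have sS : size S = k by rewrite size_map.
exists (S ++ [:: Hash]); split; first by rewrite size_cat sS addn1.
move=> i j hi hij hj.
set a := nth 0 K' i.-1; set b := nth 0 K' j.-1.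
have ab : a < b.
  apply: (sorted_ltn_nth ltn_trans) => //=; rewrite ?inE /= ?sK'; try lia.
have aK : a \in K by rewrite -(mem_sort leq) mem_nth // sK'; lia.
have bK : b \in K by rewrite -(mem_sort leq) mem_nth // sK'; lia.
have abE : (a, b) \in es.
  have := adjK a b aK bK; rewrite /adjacent.
  have -> : a != b by rewrite neq_ltn ab.
  move=> /(_ isT) /orP[//|h].
  by move/allP: Hes => /(_ _ h) /= /andP[]; lia.
exists (block k i j (a, b)); split.
- rewrite /block !size_cat !size_nseq /=; lia.
- rewrite /choice_string; move: abE; case: (es) => // e es'.
  rewrite in_cons => /orP[/eqP<-|h]; first exact: prefix_infix.
  have h' := infix_flat (nseq k (Phi (pos k i j))) (block k i j) _ _ h.
  exact: (infix_trans h' (suffix_infix _ _)).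
- have h1 : S = take i.-1 S ++ Sigma a :: drop i S.
    rewrite {1}(@split_nth _ (Sigma 0) S i.-1); last lia.
    by rewrite (nth_map 0) ?sK' //; [ rewrite prednK | lia].
  set D := drop i S.
  have sD : size D = k - i by rewrite size_drop sS.
  have h2 : D = take (j - i - 1) D ++ Sigma b :: drop (j - i) D.
    rewrite {1}(@split_nth _ (Sigma 0) D (j - i - 1)); last lia.
    rewrite nth_drop (nth_map 0); last lia.
    have -> : (j - i - 1).+1 = j - i by lia.
    by have -> : i + (j - i - 1) = j.-1 by lia.
  rewrite h1 -/D h2 /block -!catA /=.
  rewrite hamming_cat; last by rewrite size_nseq size_take sS; case: ifP; lia.
  rewrite hamming_cons -catA hamming_cat; last by rewrite size_nseq size_take sD; case: ifP; lia.
  rewrite hamming_cons hamming_cat; last by rewrite size_nseq size_drop sD; lia.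
  have -> : hamming [:: Hash] [:: Hash] = 0 by [].
  have e4 := hamming_le (take i.-1 S) (nseq (i - 1) (Phi (pos k i j))).
  have e5 := hamming_le (take (j - i - 1) D) (nseq (j - i - 1) (Phi (pos k i j))).
  have e6 := hamming_le (drop (j - i) D) (nseq (k - j) (Phi (pos k i j))).
  rewrite size_take sS in e4; rewrite size_take sD in e5; rewrite size_drop sD in e6.
  move: e4 e5; case: ifP => c1; case: ifP => c2 e4 e5; move: c1 c2; lia.
Qed.
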